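(* For any metric space $(X,d)$, any $x_0\in X$ and $n\geq 1$, the function $\rho:\pi_n(X,x_0)\times\pi_n(X,x_0)\to[0,\infty)$ is a pseudometric on $\pi_n(X,x_0)$.
   Context: $\Omega^n(X,x_0)$ is the set of continuous maps $\alpha:[0,1]^n\to X$ with $\alpha(\partial[0,1]^n)=\{x_0\}$, with uniform metric $\mu(\alpha,\beta)=\sup_{t\in[0,1]^n}d(\alpha(t),\beta(t))$. For $a,b\in\pi_n(X,x_0)$, $\rho(a,b)=\inf\{\mu(\alpha,\beta)\mid\alpha\in a,\beta\in b\}$. *)

(* Defs.v *)
From Stdlib Require Import Reals.
From Coquelicot Require Import Coquelicot.
Open Scope R_scope.

Definition is_metric {X : Type} (d : X -> X -> R) : Prop :=
  (forall x y, 0 <= d x y) /\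
  (forall x y, d x y = 0 <-> x = y) /\
  (forall x y, d x y = d y x) /\
  (forall x y z, d x z <= d x y + d y z).

(* Points of R^n are represented as t : nat -> R with t i = 0 for i >= n;
   cube n t  <->  t is a point of [0,1]^n. *)
Definition cube (n : nat) (t : nat -> R) : Prop :=
  (forall i, (i < n)%nat -> 0 <= t i <= 1) /\ (forall i, (n <= i)%nat -> t i = 0).

Definition cube_bd (n : nat) (t : nat -> R) : Prop :=
  cube n t /\ exists i, (i < n)%nat /\ (t i = 0 \/ t i = 1).

Definition cont_on_cube {X : Type} (d : X -> X -> R) (n : nat)
  (alpha : (nat -> R) -> X) : Prop :=
  forall t, cube n t -> forall eps, 0 < eps -> exists delta, 0 < delta /\
    forall s, cube n s -> (forall i, (i < n)%nat -> Rabs (s i - t i) < delta) ->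
      d (alpha s) (alpha t) < eps.

Definition Omega {X : Type} (d : X -> X -> R) (x0 : X) (n : nat)
  (alpha : (nat -> R) -> X) : Prop :=
  cont_on_cube d n alpha /\ forall t, cube_bd n t -> alpha t = x0.

Definition homotopic {X : Type} (d : X -> X -> R) (x0 : X) (n : nat)
  (alpha beta : (nat -> R) -> X) : Prop :=
  exists H : R -> (nat -> R) -> X,
    (forall s t, 0 <= s <= 1 -> cube n t -> forall eps, 0 < eps ->
       exists delta, 0 < delta /\ forall s' t', 0 <= s' <= 1 -> cube n t' ->
         Rabs (s' - s) < delta -> (forall i, (i < n)%nat -> Rabs (t' i - t i) < delta) ->
         d (H s' t') (H s t) < eps) /\
    (forall t, cube n t -> H 0 t = alpha t) /\
    (forall t, cube n t -> H 1 t = beta t) /\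
    (forall s t, 0 <= s <= 1 -> cube_bd n t -> H s t = x0).

Definition is_htpy_class {X : Type} (d : X -> X -> R) (x0 : X) (n : nat)
  (A : ((nat -> R) -> X) -> Prop) : Prop :=
  exists alpha, Omega d x0 n alpha /\
    A = (fun beta => Omega d x0 n beta /\ homotopic d x0 n alpha beta).

Definition pi_n {X : Type} (d : X -> X -> R) (x0 : X) (n : nat) : Type :=
  { A : ((nat -> R) -> X) -> Prop | is_htpy_class d x0 n A }.

Definition mu {X : Type} (d : X -> X -> R) (n : nat) (alpha beta : (nat -> R) -> X) : Rbar :=
  Lub_Rbar (fun r => exists t, cube n t /\ r = d (alpha t) (beta t)).

Definition rho {X : Type} (d : X -> X -> R) (x0 : X) (n : nat) (a b : pi_n d x0 n) : Rbar :=
  Rbar_glb (fun m => exists alpha beta,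
    proj1_sig a alpha /\ proj1_sig b beta /\ m = mu d n alpha beta).

(* Main.v *)
Require Import Defs.
From Stdlib Require Import Reals Lra Lia List ClassicalEpsilon FunctionalExtensionality.
From Coquelicot Require Import Coquelicot.
Open Scope R_scope.

Definition upd (t : nat -> R) (k : nat) (v : R) : nat -> R :=
  fun i => if Nat.eqb i k then v else t i.

Lemma cover1 (eta : R -> R) : (forall u, 0 < eta u) ->
  exists lu : list R, (forall u, In u lu -> 0 <= u <= 1) /\
    forall u', 0 <= u' <= 1 -> exists u, In u lu /\ Rabs (u' - u) < eta u.
Proof.
  intros Heta.
  assert (Hc : forall x, (exists y, (fun x y => 0 <= x <= 1 /\ Rabs (y - x) < eta x) x y) -> (fun c => 0 <= c <= 1) x).
  { intros x [y [Hy _]]. exact Hy. }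
  pose (fam := mkfamily (fun c => 0 <= c <= 1) (fun x y => 0 <= x <= 1 /\ Rabs (y - x) < eta x) Hc).
  destruct (compact_P3 0 1 fam) as [D [Hcov [l Hl]]].
  - split.
    + intros x Hx. exists x. simpl. split; auto. rewrite Rminus_diag, Rabs_R0. apply Heta.
    + intros x y [Hx Hy]. simpl in Hy.
      assert (Hp : 0 < eta x - Rabs (y - x)) by lra.
      exists (mkposreal _ Hp). intros z Hz. unfold disc in Hz. simpl in *. split; auto.
      assert (Rabs (z - x) <= Rabs (z - y) + Rabs (y - x)).
      { replace (z - x) with ((z - y) + (y - x)) by ring. apply Rabs_triang. }
      lra.
  - exists l. split.
    + intros u Hu. apply Hl in Hu. destruct Hu as [Hu _]. exact Hu.
    + intros u' Hu'. destruct (Hcov u' Hu') as [y [[Hy1 Hy2] HD]].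
      exists y. split; auto. apply Hl. split; auto.
Qed.

Definition lmin (l : list R) : R := fold_right Rmin 1 l.

Lemma lmin_pos l : (forall x, In x l -> 0 < x) -> 0 < lmin l.
Proof.
  induction l; simpl; intros H. lra.
  apply Rmin_glb_lt; auto.
Qed.

Lemma lmin_le l x : In x l -> lmin l <= x.
Proof.
  induction l; simpl; intros H. contradiction.
  destruct H as [<-|H]. apply Rmin_l. eapply Rle_trans. apply Rmin_r. auto.
Qed.


Lemma cover n (delta : (nat -> R) -> R) : (forall t, 0 < delta t) ->
  exists l : list (nat -> R), (forall t, In t l -> cube n t) /\
    forall s, cube n s -> exists t, In t l /\ forall i, (i < n)%nat -> Rabs (s i - t i) < delta t.
Proof.
  revert delta. induction n as [|n IH]; intros delta Hd.
  - exists ((fun _ => 0) :: nil). split.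
    + intros t [<-|[]]. split; intros; lia || lra.
    + intros s _. exists (fun _ => 0). split. left; auto. intros; lia.
  - pose (L := fun u => proj1_sig (constructive_indefinite_description _
                 (IH (fun t => delta (upd t n u)) (fun t => Hd _)))).
    assert (HL : forall u, (forall t, In t (L u) -> cube n t) /\
       forall s, cube n s -> exists t, In t (L u) /\ forall i, (i < n)%nat -> Rabs (s i - t i) < delta (upd t n u)).
    { intros u. exact (proj2_sig (constructive_indefinite_description _
                 (IH (fun t => delta (upd t n u)) (fun t => Hd _)))). }
    pose (eta := fun u => lmin (map (fun t => delta (upd t n u)) (L u))).
    destruct (cover1 eta) as [lu [Hlu1 Hlu2]].
    { intros u. apply lmin_pos. intros x Hx. apply in_map_iff in Hx. destruct Hx as [t [<- _]]. apply Hd. }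
    exists (flat_map (fun u => map (fun t => upd t n u) (L u)) lu). split.
    + intros T HT. apply in_flat_map in HT. destruct HT as [u [Hu HT]].
      apply in_map_iff in HT. destruct HT as [t [<- Ht]].
      destruct (HL u) as [HL1 _]. specialize (HL1 t Ht). specialize (Hlu1 u Hu).
      destruct HL1 as [H1 H2]. split; intros i Hi; unfold upd; destruct (Nat.eqb_spec i n).
      * auto.
      * apply H1. lia.
      * lia.
      * apply H2. lia.
    + intros s [Hs1 Hs2].
      destruct (Hlu2 (s n)) as [u [Hu Hsu]]. apply Hs1; lia.
      destruct (HL u) as [_ HL2].
      destruct (HL2 (upd s n 0)) as [t [Ht Hst]].
      { split; intros i Hi; unfold upd; destruct (Nat.eqb_spec i n); try lra; try lia.
        apply Hs1; lia. apply Hs2; lia. }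
      exists (upd t n u). split.
      * apply in_flat_map. exists u. split; auto. apply in_map_iff. exists t; auto.
      * intros i Hi. destruct (Nat.eqb_spec i n).
        -- subst i. unfold upd at 1. rewrite Nat.eqb_refl.
           eapply Rlt_le_trans. exact Hsu. apply lmin_le. apply in_map_iff. exists t; auto.
        -- specialize (Hst i ltac:(lia)). unfold upd in Hst |- *.
           apply Nat.eqb_neq in n0. rewrite n0 in *. exact Hst.
Qed.

Lemma finite_delta (m : nat) (P : nat -> R -> Prop) :
  (forall i del del', 0 < del' <= del -> P i del -> P i del') ->
  (forall i, (i < m)%nat -> exists del, 0 < del /\ P i del) ->
  exists del, 0 < del /\ forall i, (i < m)%nat -> P i del.
Proof.
  intros Hmon. induction m as [|m IH]; intros H.
  - exists 1. split. lra. intros; lia.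
  - destruct IH as [d1 [Hd1 H1]]. intros i Hi. apply H. lia.
    destruct (H m ltac:(lia)) as [d2 [Hd2 H2]].
    exists (Rmin d1 d2). split. apply Rmin_glb_lt; auto.
    intros i Hi. destruct (Nat.eq_dec i m) as [->|Hne].
    + apply (Hmon m d2). split. apply Rmin_glb_lt; auto. apply Rmin_r. auto.
    + apply (Hmon i d1). split. apply Rmin_glb_lt; auto. apply Rmin_l. apply H1. lia.
Qed.

Section Cont.
Variables (X : Type) (d : X -> X -> R) (n : nat).

Definition cX (E : R -> (nat -> R) -> Prop) (F : R -> (nat -> R) -> X) : Prop :=
  forall s t, E s t -> forall eps, 0 < eps -> exists del, 0 < del /\
    forall s' t', E s' t' -> Rabs (s' - s) < del -> (forall i, (i < n)%nat -> Rabs (t' i - t i) < del) ->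
      d (F s' t') (F s t) < eps.

Definition cR (E : R -> (nat -> R) -> Prop) (f : R -> (nat -> R) -> R) : Prop :=
  forall s t, E s t -> forall eps, 0 < eps -> exists del, 0 < del /\
    forall s' t', E s' t' -> Rabs (s' - s) < del -> (forall i, (i < n)%nat -> Rabs (t' i - t i) < del) ->
      Rabs (f s' t' - f s t) < eps.

Lemma cX_sub (E E' : R -> (nat -> R) -> Prop) F : (forall s t, E' s t -> E s t) -> cX E F -> cX E' F.
Proof.
  intros Hs H s t Ht eps He. destruct (H s t (Hs _ _ Ht) eps He) as [del [Hd H']].
  exists del. split; auto.
Qed.

Lemma cR_sub (E E' : R -> (nat -> R) -> Prop) f : (forall s t, E' s t -> E s t) -> cR E f -> cR E' f.
Proof.
  intros Hs H s t Ht eps He. destruct (H s t (Hs _ _ Ht) eps He) as [del [Hd H']].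
  exists del. split; auto.
Qed.

Lemma cR_const E c : cR E (fun _ _ => c).
Proof. intros s t _ eps He. exists 1. split. lra. intros. rewrite Rminus_diag, Rabs_R0. auto. Qed.

Lemma cR_s E : cR E (fun s _ => s).
Proof. intros s t _ eps He. exists eps. split; auto. Qed.

Lemma cR_t E i : (i < n)%nat -> cR E (fun _ t => t i).
Proof. intros Hi s t _ eps He. exists eps. split; auto. Qed.

Lemma cR_plus E f g : cR E f -> cR E g -> cR E (fun s t => f s t + g s t).
Proof.
  intros Hf Hg s t Ht eps He.
  destruct (Hf s t Ht (eps/2) ltac:(lra)) as [d1 [Hd1 H1]].
  destruct (Hg s t Ht (eps/2) ltac:(lra)) as [d2 [Hd2 H2]].
  exists (Rmin d1 d2). split. apply Rmin_glb_lt; auto.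
  intros s' t' Ht' Hs Hc.
  assert (A1 := H1 s' t' Ht' (Rlt_le_trans _ _ _ Hs (Rmin_l _ _)) (fun i Hi => Rlt_le_trans _ _ _ (Hc i Hi) (Rmin_l _ _))).
  assert (A2 := H2 s' t' Ht' (Rlt_le_trans _ _ _ Hs (Rmin_r _ _)) (fun i Hi => Rlt_le_trans _ _ _ (Hc i Hi) (Rmin_r _ _))).
  replace (f s' t' + g s' t' - (f s t + g s t)) with ((f s' t' - f s t) + (g s' t' - g s t)) by ring.
  eapply Rle_lt_trans. apply Rabs_triang. lra.
Qed.

Lemma cR_scal E c f : cR E f -> cR E (fun s t => c * f s t).
Proof.
  intros Hf s t Ht eps He.
  destruct (Hf s t Ht (eps / (Rabs c + 1))) as [d1 [Hd1 H1]].
  { apply Rdiv_lt_0_compat; auto. pose proof (Rabs_pos c). lra. }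
  exists d1. split; auto. intros s' t' Ht' Hs Hc.
  specialize (H1 s' t' Ht' Hs Hc).
  replace (c * f s' t' - c * f s t) with (c * (f s' t' - f s t)) by ring.
  rewrite Rabs_mult. pose proof (Rabs_pos c). pose proof (Rabs_pos (f s' t' - f s t)).
  apply Rmult_lt_compat_r with (r := Rabs c + 1) in H1; [|lra].
  unfold Rdiv in H1. rewrite Rmult_assoc, Rinv_l, Rmult_1_r in H1 by lra. nra.
Qed.

Lemma cR_mult E f g : cR E f -> cR E g -> cR E (fun s t => f s t * g s t).
Proof.
  intros Hf Hg s t Ht eps He.
  set (a := f s t). set (b := g s t).
  pose proof (Rabs_pos a). pose proof (Rabs_pos b).
  set (k1 := eps / (2 * (Rabs b + 1))).
  set (k2 := eps / (2 * (Rabs a + 1))).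
  assert (Hk1 : k1 * (Rabs b + 1) = eps / 2). { unfold k1. field. lra. }
  assert (Hk2 : k2 * (Rabs a + 1) = eps / 2). { unfold k2. field. lra. }
  assert (Pk1 : 0 < k1). { apply Rdiv_lt_0_compat; lra. }
  assert (Pk2 : 0 < k2). { apply Rdiv_lt_0_compat; lra. }
  destruct (Hf s t Ht k1 Pk1) as [d1 [Hd1 H1]].
  destruct (Hg s t Ht (Rmin 1 k2)) as [d2 [Hd2 H2]]. { apply Rmin_glb_lt; lra. }
  exists (Rmin d1 d2). split. apply Rmin_glb_lt; auto.
  intros s' t' Ht' Hs Hc.
  assert (A1 := H1 s' t' Ht' (Rlt_le_trans _ _ _ Hs (Rmin_l _ _)) (fun i Hi => Rlt_le_trans _ _ _ (Hc i Hi) (Rmin_l _ _))).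
  assert (A2 := H2 s' t' Ht' (Rlt_le_trans _ _ _ Hs (Rmin_r _ _)) (fun i Hi => Rlt_le_trans _ _ _ (Hc i Hi) (Rmin_r _ _))).
  fold a b in A1, A2 |- *.
  set (x := f s' t') in *. set (y := g s' t') in *.
  assert (A3 : Rabs (y - b) < 1) by (eapply Rlt_le_trans; [exact A2|apply Rmin_l]).
  assert (A4 : Rabs (y - b) < k2) by (eapply Rlt_le_trans; [exact A2|apply Rmin_r]).
  replace (x * y - a * b) with ((x - a) * y + a * (y - b)) by ring.
  eapply Rle_lt_trans. apply Rabs_triang. rewrite !Rabs_mult.
  assert (Hy : Rabs y <= Rabs b + 1).
  { assert (Rabs y <= Rabs b + Rabs (y - b)).
    { replace y with (b + (y - b)) at 1 by ring. apply Rabs_triang. }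
    lra. }
  pose proof (Rabs_pos (x - a)). pose proof (Rabs_pos y). pose proof (Rabs_pos (y - b)).
  assert (Rabs (x - a) * Rabs y <= Rabs (x - a) * (Rabs b + 1)) by (apply Rmult_le_compat_l; lra).
  assert (Rabs (x - a) * (Rabs b + 1) < k1 * (Rabs b + 1)) by (apply Rmult_lt_compat_r; lra).
  assert (Rabs a * Rabs (y - b) <= Rabs a * k2) by (apply Rmult_le_compat_l; lra).
  assert (Rabs a * k2 < k2 * (Rabs a + 1)) by nra.
  lra.
Qed.

Lemma cR_minus E f g : cR E f -> cR E g -> cR E (fun s t => f s t - g s t).
Proof.
  intros Hf Hg. unfold Rminus.
  apply (cR_plus E f (fun s t => - g s t)); auto.
  intros s t Ht eps He. destruct (Hg s t Ht eps He) as [del [Hd H]].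
  exists del. split; auto. intros. replace (- g s' t' - - g s t) with (- (g s' t' - g s t)) by ring.
  rewrite Rabs_Ropp. auto.
Qed.

Lemma cX_comp (D E : R -> (nat -> R) -> Prop) F p q :
  cX D F -> cR E p -> (forall i, (i < n)%nat -> cR E (fun s t => q s t i)) ->
  (forall s t, E s t -> D (p s t) (q s t)) ->
  cX E (fun s t => F (p s t) (q s t)).
Proof.
  intros HF Hp Hq HD s t Ht eps He.
  destruct (HF _ _ (HD s t Ht) eps He) as [d1 [Hd1 H1]].
  destruct (Hp s t Ht d1 Hd1) as [d2 [Hd2 H2]].
  destruct (finite_delta n (fun i del => forall s' t', E s' t' -> Rabs (s' - s) < del ->
      (forall j, (j < n)%nat -> Rabs (t' j - t j) < del) -> Rabs (q s' t' i - q s t i) < d1)) as [d3 [Hd3 H3]].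
  { intros i del del' [Hp' Hle] H s' t' Ht' Hs Hc. apply H; auto. lra.
    intros j Hj. specialize (Hc j Hj). lra. }
  { intros i Hi. destruct (Hq i Hi s t Ht d1 Hd1) as [del [Hdel H]]. exists del; auto. }
  exists (Rmin d2 d3). split. apply Rmin_glb_lt; auto.
  intros s' t' Ht' Hs Hc. apply H1.
  - apply HD; auto.
  - apply H2; auto. eapply Rlt_le_trans. exact Hs. apply Rmin_l.
    intros i Hi. eapply Rlt_le_trans. apply Hc; auto. apply Rmin_l.
  - intros i Hi. apply H3; auto. eapply Rlt_le_trans. exact Hs. apply Rmin_r.
    intros j Hj. eapply Rlt_le_trans. apply Hc; auto. apply Rmin_r.
Qed.

Lemma cX_paste (E : R -> (nat -> R) -> Prop) g F1 F2 :
  cR E g ->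
  cX (fun s t => E s t /\ g s t <= 0) F1 ->
  cX (fun s t => E s t /\ 0 <= g s t) F2 ->
  (forall s t, E s t -> g s t = 0 -> F1 s t = F2 s t) ->
  cX E (fun s t => if Rle_dec (g s t) 0 then F1 s t else F2 s t).
Proof.
  intros Hg H1 H2 Heq s t Ht eps He.
  destruct (Rle_dec (g s t) 0) as [Hle|Hgt].
  - destruct (H1 s t (conj Ht Hle) eps He) as [d1 [Hd1 A1]].
    destruct (Rlt_le_dec (g s t) 0) as [Hlt|Hge].
    + destruct (Hg s t Ht (- g s t) ltac:(lra)) as [d2 [Hd2 A2]].
      exists (Rmin d1 d2). split. apply Rmin_glb_lt; auto.
      intros s' t' Ht' Hs Hc.
      assert (B2 : Rabs (g s' t' - g s t) < - g s t).
      { apply A2; auto. eapply Rlt_le_trans. exact Hs. apply Rmin_r.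
        intros i Hi. eapply Rlt_le_trans. apply Hc; auto. apply Rmin_r. }
      apply Rabs_def2 in B2.
      destruct (Rle_dec (g s' t') 0); [|lra].
      apply A1. split; auto. eapply Rlt_le_trans. exact Hs. apply Rmin_l.
      intros i Hi. eapply Rlt_le_trans. apply Hc; auto. apply Rmin_l.
    + assert (Hz : g s t = 0) by lra.
      destruct (H2 s t (conj Ht Hge) eps He) as [d2 [Hd2 A2]].
      exists (Rmin d1 d2). split. apply Rmin_glb_lt; auto.
      intros s' t' Ht' Hs Hc.
      destruct (Rle_dec (g s' t') 0).
      * apply A1. split; auto. eapply Rlt_le_trans. exact Hs. apply Rmin_l.
        intros i Hi. eapply Rlt_le_trans. apply Hc; auto. apply Rmin_l.
      * rewrite (Heq s t Ht Hz). apply A2. split; auto. lra. eapply Rlt_le_trans. exact Hs. apply Rmin_r.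
        intros i Hi. eapply Rlt_le_trans. apply Hc; auto. apply Rmin_r.
  - assert (Hp : 0 < g s t) by lra.
    destruct (H2 s t (conj Ht (Rlt_le _ _ Hp)) eps He) as [d1 [Hd1 A1]].
    destruct (Hg s t Ht (g s t) Hp) as [d2 [Hd2 A2]].
    exists (Rmin d1 d2). split. apply Rmin_glb_lt; auto.
    intros s' t' Ht' Hs Hc.
    assert (B2 : Rabs (g s' t' - g s t) < g s t).
    { apply A2; auto. eapply Rlt_le_trans. exact Hs. apply Rmin_r.
      intros i Hi. eapply Rlt_le_trans. apply Hc; auto. apply Rmin_r. }
    apply Rabs_def2 in B2.
    destruct (Rle_dec (g s' t') 0); [lra|].
    apply A1. split; auto. lra. eapply Rlt_le_trans. exact Hs. apply Rmin_l.
    intros i Hi. eapply Rlt_le_trans. apply Hc; auto. apply Rmin_l.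
Qed.

End Cont.

Section Constr.
Variables (X : Type) (d : X -> X -> R) (x0 : X) (n : nat).
Hypothesis hd : is_metric d.
Hypothesis hn : (1 <= n)%nat.

Definition Dom (s : R) (t : nat -> R) := 0 <= s <= 1 /\ cube n t.
Definition DomC (h : R) (t : nat -> R) := -1 <= h <= 1 /\ cube n t.

Lemma htpy_cX (H : R -> (nat -> R) -> X) :
  (forall s t, 0 <= s <= 1 -> cube n t -> forall eps, 0 < eps ->
       exists delta, 0 < delta /\ forall s' t', 0 <= s' <= 1 -> cube n t' ->
         Rabs (s' - s) < delta -> (forall i, (i < n)%nat -> Rabs (t' i - t i) < delta) ->
         d (H s' t') (H s t) < eps) <-> cX X d n Dom H.
Proof.
  split.
  - intros Hc s t [Hs Ht] eps He. destruct (Hc s t Hs Ht eps He) as [del [Hdel A]].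
    exists del. split; auto. intros s' t' [Hs' Ht']. auto.
  - intros Hc s t Hs Ht eps He. destruct (Hc s t (conj Hs Ht) eps He) as [del [Hdel A]].
    exists del. split; auto. intros s' t' Hs' Ht'. apply A. split; auto.
Qed.

Lemma cube0 t : cube n t -> 0 <= t 0%nat <= 1.
Proof. intros [H _]. apply H. lia. Qed.

Lemma cube_upd t v : cube n t -> 0 <= v <= 1 -> cube n (upd t 0 v).
Proof.
  intros [H1 H2] Hv. split; intros i Hi; unfold upd; destruct (Nat.eqb_spec i 0); auto; lia.
Qed.

Lemma upd_same t : upd t 0 (t 0%nat) = t.
Proof. apply functional_extensionality. intros i. unfold upd. destruct (Nat.eqb_spec i 0); subst; auto. Qed.

Lemma cR_upd E v : cR n E v -> forall i, (i < n)%nat -> cR n E (fun s t => upd t 0 (v s t) i).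
Proof.
  intros Hv i Hi. unfold upd. destruct (Nat.eqb_spec i 0). auto. apply cR_t. auto.
Qed.

Lemma bd_upd t v : cube n t -> 0 <= v <= 1 ->
  ((exists i, (i < n)%nat /\ i <> 0%nat /\ (t i = 0 \/ t i = 1)) \/ v = 0 \/ v = 1) ->
  cube_bd n (upd t 0 v).
Proof.
  intros Ht Hv H. split. apply cube_upd; auto.
  destruct H as [[i [Hi [Hi0 Hti]]]|Hv01].
  - exists i. split; auto. unfold upd. apply Nat.eqb_neq in Hi0. rewrite Hi0. auto.
  - exists 0%nat. split. lia. unfold upd. simpl. auto.
Qed.

Lemma bd_split t : cube_bd n t ->
  (exists i, (i < n)%nat /\ i <> 0%nat /\ (t i = 0 \/ t i = 1)) \/ t 0%nat = 0 \/ t 0%nat = 1.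
Proof.
  intros [_ [i [Hi Hti]]]. destruct (Nat.eq_dec i 0) as [->|Hne]. right; auto.
  left. exists i. auto.
Qed.

End Constr.

Section G.
Variables (X : Type) (d : X -> X -> R) (x0 : X) (n : nat).
Hypothesis hd : is_metric d.
Hypothesis hn : (1 <= n)%nat.
Variables (Ha Hb Hb' Hc : R -> (nat -> R) -> X).
Hypothesis cHa : cX X d n (Dom n) Ha.
Hypothesis cHb : cX X d n (Dom n) Hb.
Hypothesis cHb' : cX X d n (Dom n) Hb'.
Hypothesis cHc : cX X d n (Dom n) Hc.
Hypothesis bHa : forall s t, 0 <= s <= 1 -> cube_bd n t -> Ha s t = x0.
Hypothesis bHb : forall s t, 0 <= s <= 1 -> cube_bd n t -> Hb s t = x0.
Hypothesis bHb' : forall s t, 0 <= s <= 1 -> cube_bd n t -> Hb' s t = x0.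
Hypothesis bHc : forall s t, 0 <= s <= 1 -> cube_bd n t -> Hc s t = x0.
Hypothesis Hb0 : forall t, cube n t -> Hb 0 t = Hb' 0 t.

Lemma cR_opp E f : cR n E f -> cR n E (fun s t => - f s t).
Proof.
  intros Hf s t Ht eps He. destruct (Hf s t Ht eps He) as [del [Hd H]].
  exists del. split; auto. intros. replace (- f s' t' - - f s t) with (- (f s' t' - f s t)) by ring.
  rewrite Rabs_Ropp. auto.
Qed.

Definition Cb h t := if Rle_dec h 0 then Hb (- h) t else Hb' h t.

Lemma Cb_bd h t : -1 <= h <= 1 -> cube_bd n t -> Cb h t = x0.
Proof. intros Hh Ht. unfold Cb. destruct (Rle_dec h 0). apply bHb; auto; lra. apply bHb'; auto; lra. Qed.

Lemma cCb : cX X d n (DomC n) Cb.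
Proof.
  unfold Cb.
  apply (cX_paste X d n (DomC n) (fun h _ => h) (fun h t => Hb (-h) t) (fun h t => Hb' h t)).
  - apply cR_s.
  - apply (cX_comp X d n (Dom n) _ Hb (fun h _ => - h) (fun _ t => t)); auto.
    + apply cR_opp. apply cR_s.
    + intros i Hi. apply cR_t; auto.
    + intros s t [[Hs Ht] Hle]. split; auto. lra.
  - apply (cX_comp X d n (Dom n) _ Hb' (fun h _ => h) (fun _ t => t)); auto.
    + apply cR_s.
    + intros i Hi. apply cR_t; auto.
    + intros s t [[Hs Ht] Hle]. split; auto. lra.
  - intros h t [_ Ht] ->. rewrite Ropp_0. auto.
Qed.

Definition lin (s : R) (t : nat -> R) := t 0%nat * (1 + 3 * s).
Definition wA s t := lin s t - 1.

Lemma cR_lin E : cR n E lin.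
Proof.
  unfold lin. apply (cR_mult n E (fun _ t => t 0%nat) (fun s _ => 1 + 3 * s)).
  apply cR_t; lia.
  apply (cR_plus n E (fun _ _ => 1) (fun s _ => 3 * s)). apply cR_const.
  apply (cR_scal n E 3 (fun s _ => s)). apply cR_s.
Qed.

Lemma cR_wA E : cR n E wA.
Proof. unfold wA. apply (cR_minus n E lin (fun _ _ => 1)). apply cR_lin. apply cR_const. Qed.

Lemma lin_bounds s t : Dom n s t -> 0 <= lin s t <= 1 + 3 * s.
Proof.
  intros [Hs Ht]. pose proof (cube0 n hn t Ht). unfold lin. split; nra.
Qed.

Definition GA s t :=
  if Rle_dec (wA s t) 0 then Ha s (upd t 0 (lin s t))
  else if Rle_dec (wA s t - s) 0 then Cb (- s) (upd t 0 (1 - wA s t))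
  else if Rle_dec (wA s t - 2 * s) 0 then Cb (2 * wA s t - 3 * s) (upd t 0 (1 - s))
  else Cb s (upd t 0 (wA s t - 3 * s + 1)).

Lemma cGA : cX X d n (Dom n) GA.
Proof.
  unfold GA.
  apply (cX_paste X d n (Dom n) wA (fun s t => Ha s (upd t 0 (lin s t)))
    (fun s t => if Rle_dec (wA s t - s) 0 then Cb (- s) (upd t 0 (1 - wA s t))
      else if Rle_dec (wA s t - 2 * s) 0 then Cb (2 * wA s t - 3 * s) (upd t 0 (1 - s))
      else Cb s (upd t 0 (wA s t - 3 * s + 1)))).
  - apply cR_wA.
  - apply (cX_comp X d n (Dom n) _ Ha (fun s _ => s) (fun s t => upd t 0 (lin s t))); auto.
    + apply cR_s.
    + apply cR_upd. apply cR_lin.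
    + intros s t [[Hs Ht] Hw]. pose proof (lin_bounds s t (conj Hs Ht)). unfold wA in Hw.
      split; auto. apply cube_upd; auto. lra.
  - apply (cX_paste X d n _ (fun s t => wA s t - s) (fun s t => Cb (- s) (upd t 0 (1 - wA s t)))
      (fun s t => if Rle_dec (wA s t - 2 * s) 0 then Cb (2 * wA s t - 3 * s) (upd t 0 (1 - s))
      else Cb s (upd t 0 (wA s t - 3 * s + 1)))).
    + apply (cR_minus n _ wA (fun s _ => s)). apply cR_wA. apply cR_s.
    + apply (cX_comp X d n (DomC n) _ Cb (fun s _ => - s) (fun s t => upd t 0 (1 - wA s t))).
      * apply cCb.
      * apply cR_opp. apply cR_s.
      * apply cR_upd. apply (cR_minus n _ (fun _ _ => 1) wA). apply cR_const. apply cR_wA.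
      * intros s t [[[Hs Ht] Hw] Hw2]. split. lra. apply cube_upd; auto. lra.
    + apply (cX_paste X d n _ (fun s t => wA s t - 2 * s)
        (fun s t => Cb (2 * wA s t - 3 * s) (upd t 0 (1 - s)))
        (fun s t => Cb s (upd t 0 (wA s t - 3 * s + 1)))).
      * apply (cR_minus n _ wA (fun s _ => 2 * s)). apply cR_wA. apply (cR_scal n _ 2 (fun s _ => s)). apply cR_s.
      * apply (cX_comp X d n (DomC n) _ Cb (fun s t => 2 * wA s t - 3 * s) (fun s t => upd t 0 (1 - s))).
        -- apply cCb.
        -- apply (cR_minus n _ (fun s t => 2 * wA s t) (fun s _ => 3 * s)).
           apply (cR_scal n _ 2 wA). apply cR_wA. apply (cR_scal n _ 3 (fun s _ => s)). apply cR_s.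
        -- apply cR_upd. apply (cR_minus n _ (fun _ _ => 1) (fun s _ => s)). apply cR_const. apply cR_s.
        -- intros s t [[[[Hs Ht] Hw] Hw2] Hw3]. split. lra. apply cube_upd; auto. lra.
      * apply (cX_comp X d n (DomC n) _ Cb (fun s _ => s) (fun s t => upd t 0 (wA s t - 3 * s + 1))).
        -- apply cCb.
        -- apply cR_s.
        -- apply cR_upd. apply (cR_plus n _ (fun s t => wA s t - 3 * s) (fun _ _ => 1)).
           apply (cR_minus n _ wA (fun s _ => 3 * s)). apply cR_wA.
           apply (cR_scal n _ 3 (fun s _ => s)). apply cR_s. apply cR_const.
        -- intros s t [[[[Hs Ht] Hw] Hw2] Hw3]. pose proof (lin_bounds s t (conj Hs Ht)). unfold wA in *.
           split. lra. apply cube_upd; auto. lra.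
      * intros s t _ Hz. f_equal. lra. f_equal. lra.
    + intros s t [[Hs Ht] Hw] Hz. destruct (Rle_dec (wA s t - 2 * s) 0); [|lra].
      f_equal. lra. f_equal. lra.
  - intros s t [Hs Ht] Hz. destruct (Rle_dec (wA s t - s) 0); [|lra].
    rewrite bHa, Cb_bd; auto. lra. apply bd_upd; auto. lra. right; right. lra.
    apply bd_upd; auto. unfold wA in Hz. lra. right; right. unfold wA in Hz; lra.
Qed.

Lemma bGA s t : 0 <= s <= 1 -> cube_bd n t -> GA s t = x0.
Proof.
  intros Hs Hbd. assert (Ht := proj1 Hbd). pose proof (lin_bounds s t (conj Hs Ht)).
  unfold GA, wA in *. destruct (bd_split n t Hbd) as [Hi|Hx].
  - destruct (Rle_dec _ 0). apply bHa; auto. apply bd_upd; auto; lra.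
    destruct (Rle_dec _ 0). apply Cb_bd. lra. apply bd_upd; auto; lra.
    destruct (Rle_dec _ 0). apply Cb_bd. lra. apply bd_upd; auto; lra.
    apply Cb_bd. lra. apply bd_upd; auto; lra.
  - assert (Hl : lin s t = 0 \/ lin s t = 1 + 3 * s).
    { unfold lin. destruct Hx as [-> | ->]; [left|right]; ring. }
    destruct (Rle_dec _ 0). apply bHa; auto. apply bd_upd; auto; lra.
    destruct (Rle_dec _ 0). lra.
    destruct (Rle_dec _ 0). lra.
    apply Cb_bd. lra. apply bd_upd; auto; lra.
Qed.

Lemma GA0 t : cube n t -> GA 0 t = Ha 0 t.
Proof.
  intros Ht. pose proof (cube0 n hn t Ht). unfold GA, wA, lin.
  destruct (Rle_dec _ 0); [|lra]. replace (t 0%nat * (1 + 3 * 0)) with (t 0%nat) by ring. rewrite upd_same. auto.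
Qed.

Definition lin2 (s : R) (t : nat -> R) := (1 - t 0%nat) * (1 + 3 * s).
Definition wC s t := lin2 s t - 1.

Lemma cR_lin2 E : cR n E lin2.
Proof.
  unfold lin2. apply (cR_mult n E (fun _ t => 1 - t 0%nat) (fun s _ => 1 + 3 * s)).
  apply (cR_minus n E (fun _ _ => 1) (fun _ t => t 0%nat)). apply cR_const. apply cR_t; lia.
  apply (cR_plus n E (fun _ _ => 1) (fun s _ => 3 * s)). apply cR_const.
  apply (cR_scal n E 3 (fun s _ => s)). apply cR_s.
Qed.

Lemma cR_wC E : cR n E wC.
Proof. unfold wC. apply (cR_minus n E lin2 (fun _ _ => 1)). apply cR_lin2. apply cR_const. Qed.

Lemma lin2_bounds s t : Dom n s t -> 0 <= lin2 s t <= 1 + 3 * s.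
Proof.
  intros [Hs Ht]. pose proof (cube0 n hn t Ht). unfold lin2. split; nra.
Qed.

Definition GC s t :=
  if Rle_dec (wC s t) 0 then Hc s (upd t 0 (1 - lin2 s t))
  else if Rle_dec (wC s t - s) 0 then Hb s (upd t 0 0)
  else if Rle_dec (wC s t - 2 * s) 0 then Hb s (upd t 0 (wC s t - s))
  else Hb s (upd t 0 (3 * s - wC s t)).

Lemma cGC : cX X d n (Dom n) GC.
Proof.
  unfold GC.
  apply (cX_paste X d n (Dom n) wC (fun s t => Hc s (upd t 0 (1 - lin2 s t)))
    (fun s t => if Rle_dec (wC s t - s) 0 then Hb s (upd t 0 0)
      else if Rle_dec (wC s t - 2 * s) 0 then Hb s (upd t 0 (wC s t - s))
      else Hb s (upd t 0 (3 * s - wC s t)))).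
  - apply cR_wC.
  - apply (cX_comp X d n (Dom n) _ Hc (fun s _ => s) (fun s t => upd t 0 (1 - lin2 s t))); auto.
    + apply cR_s.
    + apply cR_upd. apply (cR_minus n _ (fun _ _ => 1) lin2). apply cR_const. apply cR_lin2.
    + intros s t [[Hs Ht] Hw]. pose proof (lin2_bounds s t (conj Hs Ht)). unfold wC in Hw.
      split; auto. apply cube_upd; auto. lra.
  - apply (cX_paste X d n _ (fun s t => wC s t - s) (fun s t => Hb s (upd t 0 0))
      (fun s t => if Rle_dec (wC s t - 2 * s) 0 then Hb s (upd t 0 (wC s t - s))
      else Hb s (upd t 0 (3 * s - wC s t)))).
    + apply (cR_minus n _ wC (fun s _ => s)). apply cR_wC. apply cR_s.
    + apply (cX_comp X d n (Dom n) _ Hb (fun s _ => s) (fun s t => upd t 0 0)); auto.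
      * apply cR_s.
      * apply cR_upd. apply cR_const.
      * intros s t [[[Hs Ht] Hw] Hw2]. split. lra. apply cube_upd; auto. lra.
    + apply (cX_paste X d n _ (fun s t => wC s t - 2 * s)
        (fun s t => Hb s (upd t 0 (wC s t - s)))
        (fun s t => Hb s (upd t 0 (3 * s - wC s t)))).
      * apply (cR_minus n _ wC (fun s _ => 2 * s)). apply cR_wC. apply (cR_scal n _ 2 (fun s _ => s)). apply cR_s.
      * apply (cX_comp X d n (Dom n) _ Hb (fun s _ => s) (fun s t => upd t 0 (wC s t - s))); auto.
        -- apply cR_s.
        -- apply cR_upd. apply (cR_minus n _ wC (fun s _ => s)). apply cR_wC. apply cR_s.
        -- intros s t [[[[Hs Ht] Hw] Hw2] Hw3]. split. lra. apply cube_upd; auto. lra.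
      * apply (cX_comp X d n (Dom n) _ Hb (fun s _ => s) (fun s t => upd t 0 (3 * s - wC s t))); auto.
        -- apply cR_s.
        -- apply cR_upd. apply (cR_minus n _ (fun s _ => 3 * s) wC).
           apply (cR_scal n _ 3 (fun s _ => s)). apply cR_s. apply cR_wC.
        -- intros s t [[[[Hs Ht] Hw] Hw2] Hw3]. pose proof (lin2_bounds s t (conj Hs Ht)). unfold wC in *.
           split. lra. apply cube_upd; auto. lra.
      * intros s t _ Hz. f_equal. f_equal. lra.
    + intros s t [[Hs Ht] Hw] Hz. destruct (Rle_dec (wC s t - 2 * s) 0); [|lra].
      f_equal. f_equal. lra.
  - intros s t [Hs Ht] Hz. destruct (Rle_dec (wC s t - s) 0); [|lra].
    unfold wC in Hz.
    pose proof (lin2_bounds s t (conj Hs Ht)).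
    transitivity x0.
    + apply bHc; auto. apply bd_upd; auto; try lra; try (right; left; lra).
    + symmetry. apply bHb; auto. apply bd_upd; auto; try lra; try (right; left; lra).
Qed.

Lemma bGC s t : 0 <= s <= 1 -> cube_bd n t -> GC s t = x0.
Proof.
  intros Hs Hbd. assert (Ht := proj1 Hbd). pose proof (lin2_bounds s t (conj Hs Ht)).
  unfold GC, wC in *. destruct (bd_split n t Hbd) as [Hi|Hx].
  - destruct (Rle_dec _ 0). apply bHc; auto. apply bd_upd; auto; lra.
    destruct (Rle_dec _ 0). apply bHb; auto. apply bd_upd; auto; lra.
    destruct (Rle_dec _ 0). apply bHb; auto. apply bd_upd; auto; lra.
    apply bHb; auto. apply bd_upd; auto; lra.
  - assert (Hl : lin2 s t = 1 + 3 * s \/ lin2 s t = 0).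
    { unfold lin2. destruct Hx as [-> | ->]; [left|right]; ring. }
    destruct (Rle_dec _ 0). apply bHc; auto. apply bd_upd; auto; lra.
    destruct (Rle_dec _ 0). lra.
    destruct (Rle_dec _ 0). lra.
    apply bHb; auto. apply bd_upd; auto; lra.
Qed.

Lemma GC0 t : cube n t -> GC 0 t = Hc 0 t.
Proof.
  intros Ht. pose proof (cube0 n hn t Ht). unfold GC, wC, lin2.
  destruct (Rle_dec _ 0); [|lra]. replace (1 - (1 - t 0%nat) * (1 + 3 * 0)) with (t 0%nat) by ring.
  rewrite upd_same. auto.
Qed.

Variables (alpha beta beta' gamma : (nat -> R) -> X) (M1 M2 : R).
Hypothesis hA1 : forall t, cube n t -> Ha 1 t = alpha t.
Hypothesis hB1 : forall t, cube n t -> Hb 1 t = beta t.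
Hypothesis hB'1 : forall t, cube n t -> Hb' 1 t = beta' t.
Hypothesis hC1 : forall t, cube n t -> Hc 1 t = gamma t.
Hypothesis hM1 : 0 <= M1.
Hypothesis hM2 : 0 <= M2.
Hypothesis dM1 : forall t, cube n t -> d (alpha t) (beta t) <= M1.
Hypothesis dM2 : forall t, cube n t -> d (beta' t) (gamma t) <= M2.

Lemma dist1 t : cube n t -> d (GA 1 t) (GC 1 t) <= M1 + M2.
Proof.
  intros Ht. pose proof (cube0 n hn t Ht) as Hx.
  unfold GA, GC, wA, wC, lin, lin2, Cb.
  repeat destruct (Rle_dec _ 0); try (exfalso; lra).
  all: assert (dz : forall x, d x x = 0) by (intros; apply (proj1 (proj2 hd)); auto).
  all: try (match goal with |- d (_ _ (upd _ _ ?v1)) (_ _ (upd _ _ ?v2)) <= _ =>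
         replace v2 with v1 by lra end).
  all: try (replace (- - (1)) with 1 by ring).
  - rewrite hA1, hB1 by (apply cube_upd; auto; lra). pose proof (dM1 (upd t 0 (t 0%nat * (1 + 3 * 1)))
      ltac:(apply cube_upd; auto; lra)). lra.
  - rewrite hA1, hB1 by (apply cube_upd; auto; lra). pose proof (dM1 (upd t 0 (t 0%nat * (1 + 3 * 1)))
      ltac:(apply cube_upd; auto; lra)). lra.
  - rewrite dz. lra.
  - rewrite dz. lra.
  - rewrite !bHb; try (apply bd_upd; auto; try lra; try (right; left; lra)); try lra. rewrite dz. lra.
  - rewrite bHb', bHc; try (apply bd_upd; auto; try lra; try (right; left; lra)); try lra. rewrite dz. lra.
  - rewrite bHb', bHb; try (apply bd_upd; auto; try lra; try (right; left; lra)); try lra. rewrite dz. lra.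
  - assert (Hc' : cube n (upd t 0 (t 0%nat * (1 + 3 * 1) - 1 - 3 * 1 + 1))) by (apply cube_upd; auto; lra).
    rewrite (hB'1 _ Hc'), (hC1 _ Hc'). pose proof (dM2 _ Hc'). lra.
Qed.

End G.

Section T.
Variables (X : Type) (d : X -> X -> R) (x0 : X) (n : nat).
Hypothesis hd : is_metric d.
Hypothesis hn : (1 <= n)%nat.

Lemma slice_omega (G : R -> (nat -> R) -> X) :
  cX X d n (Dom n) G -> (forall s t, 0 <= s <= 1 -> cube_bd n t -> G s t = x0) ->
  Omega d x0 n (G 1).
Proof.
  intros Hc Hb. split.
  - intros t Ht eps He. destruct (Hc 1 t (conj (conj Rle_0_1 (Rle_refl 1)) Ht) eps He) as [del [Hd H]].
    exists del. split; auto. intros s Hs Hst. apply H.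
    + split; [lra|auto].
    + rewrite Rminus_diag, Rabs_R0. auto.
    + auto.
  - intros t Ht. apply Hb; auto; lra.
Qed.

Lemma tri_core a0 b0 c0 alpha beta beta' gamma M1 M2 :
  Omega d x0 n alpha -> homotopic d x0 n a0 alpha ->
  Omega d x0 n beta -> homotopic d x0 n b0 beta ->
  Omega d x0 n beta' -> homotopic d x0 n b0 beta' ->
  Omega d x0 n gamma -> homotopic d x0 n c0 gamma ->
  0 <= M1 -> 0 <= M2 ->
  (forall t, cube n t -> d (alpha t) (beta t) <= M1) ->
  (forall t, cube n t -> d (beta' t) (gamma t) <= M2) ->
  exists alpha'' gamma'', Omega d x0 n alpha'' /\ homotopic d x0 n a0 alpha'' /\
    Omega d x0 n gamma'' /\ homotopic d x0 n c0 gamma'' /\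
    forall t, cube n t -> d (alpha'' t) (gamma'' t) <= M1 + M2.
Proof.
  intros _ [Ha [cHa [Ha0 [Ha1 bHa]]]] _ [Hb [cHb [Hb0 [Hb1 bHb]]]]
         _ [Hb' [cHb' [Hb'0 [Hb'1 bHb']]]] _ [Hc [cHc [Hc0 [Hc1 bHc]]]] hM1 hM2 dM1 dM2.
  apply htpy_cX in cHa, cHb, cHb', cHc.
  assert (E0 : forall t, cube n t -> Hb 0 t = Hb' 0 t).
  { intros t Ht. rewrite Hb0, Hb'0; auto. }
  assert (cA := cGA X d x0 n hn Ha Hb Hb' cHa cHb cHb' bHa bHb bHb' E0).
  assert (bA := bGA X x0 n hn Ha Hb Hb' bHa bHb bHb').
  assert (cC := cGC X d x0 n hn Hb Hc cHb cHc bHb bHc).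
  assert (bC := bGC X x0 n hn Hb Hc bHb bHc).
  exists (GA X Ha Hb Hb' 1), (GC X Hb Hc 1).
  split; [|split; [|split; [|split]]].
  - apply slice_omega; auto.
  - exists (GA X Ha Hb Hb'). split; [|split; [|split]].
    + apply htpy_cX. auto.
    + intros t Ht. rewrite (GA0 X n hn); auto.
    + auto.
    + auto.
  - apply slice_omega; auto.
  - exists (GC X Hb Hc). split; [|split; [|split]].
    + apply htpy_cX. auto.
    + intros t Ht. rewrite (GC0 X n hn); auto.
    + auto.
    + auto.
  - apply (dist1 X d x0 n hd hn Ha Hb Hb' Hc bHb bHb' bHc alpha beta beta' gamma M1 M2); auto.
Qed.
End T.

Definition lmax (l : list R) : R := fold_right Rmax 0 l.
Lemma lmax_ge l x : In x l -> x <= lmax l.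
Proof.
  induction l; simpl; intros H. contradiction.
  destruct H as [<-|H]. apply Rmax_l. eapply Rle_trans. 2: apply Rmax_r. auto.
Qed.

Section S.
Variables (X : Type) (d : X -> X -> R) (x0 : X) (n : nat).
Hypothesis hd : is_metric d.

Lemma zero_cube : cube n (fun _ => 0).
Proof. split; intros; lra. Qed.

Lemma bounded alpha : cont_on_cube d n alpha ->
  exists B, forall t, cube n t -> d (alpha t) x0 <= B.
Proof.
  intros Hc.
  assert (H : forall t, exists del, 0 < del /\ (cube n t -> forall s, cube n s ->
     (forall i, (i < n)%nat -> Rabs (s i - t i) < del) -> d (alpha s) (alpha t) < 1)).
  { intros t. destruct (classic (cube n t)) as [Ht|Ht].
    - destruct (Hc t Ht 1 Rlt_0_1) as [del [Hdel H]]. exists del. split; auto.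
    - exists 1. split. lra. intros; contradiction. }
  pose (del := fun t => proj1_sig (constructive_indefinite_description _ (H t))).
  assert (Hdel : forall t, 0 < del t /\ (cube n t -> forall s, cube n s ->
     (forall i, (i < n)%nat -> Rabs (s i - t i) < del t) -> d (alpha s) (alpha t) < 1)).
  { intros t. exact (proj2_sig (constructive_indefinite_description _ (H t))). }
  destruct (cover n del (fun t => proj1 (Hdel t))) as [l [Hl1 Hl2]].
  exists (1 + lmax (map (fun t => d (alpha t) x0) l)).
  intros s Hs. destruct (Hl2 s Hs) as [t [Ht Hst]].
  destruct hd as [_ [_ [_ Htri]]].
  pose proof (proj2 (Hdel t) (Hl1 t Ht) s Hs Hst).
  assert (d (alpha t) x0 <= lmax (map (fun t => d (alpha t) x0) l)).
  { apply lmax_ge. apply in_map_iff. exists t; auto. }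
  pose proof (Htri (alpha s) (alpha t) x0). lra.
Qed.

Lemma mu_fin alpha beta : Omega d x0 n alpha -> Omega d x0 n beta ->
  exists M, mu d n alpha beta = Finite M /\ 0 <= M /\
    forall t, cube n t -> d (alpha t) (beta t) <= M.
Proof.
  intros [Ha _] [Hb _].
  destruct (bounded alpha Ha) as [Ba HBa].
  destruct (bounded beta Hb) as [Bb HBb].
  destruct hd as [Hpos [_ [Hsym Htri]]].
  unfold mu.
  destruct (Lub_Rbar_correct (fun r => exists t, cube n t /\ r = d (alpha t) (beta t))) as [Hub Hlub].
  assert (H1 : Rbar_le (Lub_Rbar (fun r => exists t, cube n t /\ r = d (alpha t) (beta t))) (Finite (Ba + Bb))).
  { apply Hlub. intros r [t [Ht ->]]. simpl.
    pose proof (Htri (alpha t) x0 (beta t)). pose proof (HBa t Ht). pose proof (HBb t Ht).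
    rewrite (Hsym x0) in H. lra. }
  assert (H2 := Hub (d (alpha (fun _ => 0)) (beta (fun _ => 0))) (ex_intro _ _ (conj zero_cube eq_refl))).
  destruct (Lub_Rbar _) as [r| |]; simpl in H1, H2; try contradiction.
  exists r. split; auto. split. pose proof (Hpos (alpha (fun _ => 0)) (beta (fun _ => 0))). simpl in *. lra.
  intros t Ht. exact (Hub _ (ex_intro _ t (conj Ht eq_refl))).
Qed.

Lemma mu_le alpha beta M : (forall t, cube n t -> d (alpha t) (beta t) <= M) ->
  Rbar_le (mu d n alpha beta) (Finite M).
Proof.
  intros H. unfold mu. apply (proj2 (Lub_Rbar_correct _)).
  intros r [t [Ht ->]]. simpl. auto.
Qed.

Lemma mu_self alpha : mu d n alpha alpha = Finite 0.
Proof.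
  unfold mu. apply is_lub_Rbar_unique. destruct hd as [_ [Hz _]]. split.
  - intros r [t [_ ->]]. simpl. right. apply Hz. auto.
  - intros b Hb. apply (Hb 0). exists (fun _ => 0). split. apply zero_cube.
    symmetry. apply Hz. auto.
Qed.

Lemma mu_sym alpha beta : mu d n alpha beta = mu d n beta alpha.
Proof.
  unfold mu. apply Lub_Rbar_eqset. destruct hd as [_ [_ [Hs _]]].
  intros x; split; intros [t [Ht ->]]; exists t; split; auto.
Qed.

Lemma htpy_refl alpha : Omega d x0 n alpha -> homotopic d x0 n alpha alpha.
Proof.
  intros [Hc Hb]. exists (fun _ t => alpha t). refine (conj _ (conj _ (conj _ _))).
  - intros s t _ Ht eps He. destruct (Hc t Ht eps He) as [del [Hd H]].
    exists del. split; auto.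
  - auto.
  - auto.
  - auto.
Qed.

Lemma glb_fin (S : Rbar -> Prop) M0 :
  (forall m, S m -> Rbar_le (Finite 0) m) -> S (Finite M0) ->
  exists r, Rbar_glb S = Finite r /\ 0 <= r /\ r <= M0.
Proof.
  intros H0 HM. destruct (proj2_sig (Rbar_ex_glb S)) as [Hlb Hg].
  assert (A1 := Hlb _ HM). assert (A2 := Hg _ H0).
  unfold Rbar_glb. destruct (proj1_sig _) as [r| |]; simpl in *; try contradiction.
  exists r. auto.
Qed.


End S.

Lemma tri_glb (S1 S2 S3 : Rbar -> Prop) :
  (forall m, S1 m -> exists x, m = Finite x) ->
  (forall m, S2 m -> exists x, m = Finite x) ->
  (forall x1 x2, S1 (Finite x1) -> S2 (Finite x2) -> Rbar_le (Rbar_glb S3) (Finite (x1 + x2))) ->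
  forall r1 r2 r3, Rbar_glb S1 = Finite r1 -> Rbar_glb S2 = Finite r2 -> Rbar_glb S3 = Finite r3 ->
  r3 <= r1 + r2.
Proof.
  intros H1 H2 H r1 r2 r3 E1 E2 E3.
  assert (Hb2 : forall x2, S2 (Finite x2) -> r3 - x2 <= r1).
  { intros x2 Hx2. destruct (proj2_sig (Rbar_ex_glb S1)) as [_ Hg].
    assert (Rbar_le (Finite (r3 - x2)) (Rbar_glb S1)).
    { apply Hg. intros m Hm. destruct (H1 m Hm) as [x1 ->].
      specialize (H x1 x2 Hm Hx2). rewrite E3 in H. simpl in *. lra. }
    rewrite E1 in H0. exact H0. }
  destruct (proj2_sig (Rbar_ex_glb S2)) as [_ Hg].
  assert (Rbar_le (Finite (r3 - r1)) (Rbar_glb S2)).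
  { apply Hg. intros m Hm. destruct (H2 m Hm) as [x2 ->]. specialize (Hb2 x2 Hm). simpl. lra. }
  rewrite E2 in H0. simpl in H0. lra.
Qed.

Lemma rho_fin (X : Type) (d : X -> X -> R) (x0 : X) (n : nat) (hd : is_metric d) (a b : pi_n d x0 n) :
  exists r : R, rho d x0 n a b = Finite r /\ 0 <= r.
Proof.
  destruct a as [A [a0 [Ha0 EA]]]. destruct b as [B [b0 [Hb0 EB]]].
  unfold rho; simpl.
  destruct (mu_fin X d x0 n hd a0 b0 Ha0 Hb0) as [M0 [E0 _]].
  destruct (glb_fin (fun m => exists alpha beta, A alpha /\ B beta /\ m = mu d n alpha beta) M0)
    as [r [Er [Hr _]]].
  - intros m [al [be [Hal [Hbe ->]]]]. subst A B. destruct Hal as [Hal _]. destruct Hbe as [Hbe _].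
    destruct (mu_fin X d x0 n hd al be Hal Hbe) as [M [-> [HM _]]]. simpl. auto.
  - exists a0, b0. subst A B. split. split; auto. apply htpy_refl; auto.
    split. split; auto. apply htpy_refl; auto. auto.
  - exists r. auto.
Qed.

Theorem theorem4p5 (X : Type) (d : X -> X -> R) (x0 : X) (n : nat)
  (hd : is_metric d) (hn : (1 <= n)%nat) :
  (forall a b : pi_n d x0 n, exists r : R, rho d x0 n a b = Finite r /\ 0 <= r) /\
  (forall a : pi_n d x0 n, rho d x0 n a a = Finite 0) /\
  (forall a b : pi_n d x0 n, rho d x0 n a b = rho d x0 n b a) /\
  (forall a b c : pi_n d x0 n,
     Rbar_le (rho d x0 n a c) (Rbar_plus (rho d x0 n a b) (rho d x0 n b c))).
Proof.
  split; [|split; [|split]].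
  - apply rho_fin; auto.
  - intros a. destruct (rho_fin X d x0 n hd a a) as [r [Er Hr]].
    rewrite Er. f_equal. apply Rle_antisym; auto.
    destruct a as [A [a0 [Ha0 EA]]]. unfold rho in Er; simpl in Er.
    destruct (proj2_sig (Rbar_ex_glb (fun m => exists alpha beta, A alpha /\ A beta /\ m = mu d n alpha beta))) as [Hlb _].
    assert (HA : A a0). { subst A. split; auto. apply htpy_refl; auto. }
    specialize (Hlb (mu d n a0 a0) (ex_intro _ a0 (ex_intro _ a0 (conj HA (conj HA eq_refl))))).
    unfold Rbar_glb in Er. rewrite Er, mu_self in Hlb; auto.
  - intros a b. unfold rho. apply Rbar_glb_rw. intros m.
    split; intros [al [be [H1 [H2 ->]]]]; exists be, al; split; auto; split; auto; apply mu_sym; auto.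
  - intros a b c.
    destruct (rho_fin X d x0 n hd a b) as [r1 [E1 _]].
    destruct (rho_fin X d x0 n hd b c) as [r2 [E2 _]].
    destruct (rho_fin X d x0 n hd a c) as [r3 [E3 _]].
    rewrite E1, E2, E3. simpl.
    unfold rho in E1, E2, E3.
    destruct a as [A [a0 [Ha0 EA]]]. destruct b as [B [b0 [Hb0 EB]]]. destruct c as [C [c0 [Hc0 EC]]].
    simpl in E1, E2, E3.
    refine (tri_glb _ _ _ _ _ _ r1 r2 r3 E1 E2 E3).
    + intros m [al [be [H1 [H2 ->]]]]. subst A B.
      destruct (mu_fin X d x0 n hd al be (proj1 H1) (proj1 H2)) as [M [-> _]]. eauto.
    + intros m [al [be [H1 [H2 ->]]]]. subst C B.
      destruct (mu_fin X d x0 n hd al be (proj1 H1) (proj1 H2)) as [M [-> _]]. eauto.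
    + intros x1 x2 [al [be [H1 [H2 Ex1]]]] [be' [ga [H3 [H4 Ex2]]]].
      subst A B C.
      destruct (mu_fin X d x0 n hd al be (proj1 H1) (proj1 H2)) as [M1 [EM1 [HM1 HM1']]].
      destruct (mu_fin X d x0 n hd be' ga (proj1 H3) (proj1 H4)) as [M2 [EM2 [HM2 HM2']]].
      rewrite EM1 in Ex1. rewrite EM2 in Ex2. injection Ex1 as ->. injection Ex2 as ->.
      destruct (tri_core X d x0 n hd hn a0 b0 c0 al be be' ga M1 M2 (proj1 H1) (proj2 H1)
         (proj1 H2) (proj2 H2) (proj1 H3) (proj2 H3) (proj1 H4) (proj2 H4) HM1 HM2 HM1' HM2')
        as [al2 [ga2 [Oa [Ha [Og [Hg Hd]]]]]].
      destruct (proj2_sig (Rbar_ex_glb (fun m => exists alpha beta,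
         (Omega d x0 n alpha /\ homotopic d x0 n a0 alpha) /\
         (Omega d x0 n beta /\ homotopic d x0 n c0 beta) /\ m = mu d n alpha beta))) as [Hlb _].
      eapply Rbar_le_trans. apply (Hlb (mu d n al2 ga2)). exists al2, ga2. auto.
      apply mu_le. auto.
Qed.
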